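(* For all integers $t\ge0$ and $k\ge1$, \[D(2^{k+1}t+2^k-1)\ge\min\bigl(D(t),D(t+1)\bigr)+\frac{k}{2^{k-1}}.\]
   Context: $s(n)$ is the number of $1$s in the binary expansion of $n\ge0$; $\delta(j,t)=\lim_{N\to\infty}\frac1N|\{0\le n<N: s(n+t)-s(n)=j\}|$ for $j\in\mathbb Z$, a probability distribution on $\mathbb Z$, and $\kappa_j(t)$ denotes its $j$-th cumulant ($\log\sum_k\delta(k,t)e^{2\pi ik\vartheta}=\sum_{j\ge0}\frac{\kappa_j(t)}{j!}(2\pi i\vartheta)^j$ near $\vartheta=0$). Set $D(t)=\kappa_2(t)-\kappa_3(t)/3$. *)

(* Defs.v *)
From Stdlib Require Import Reals ZArith Arith List Lra Lia.
From Coquelicot Require Import Coquelicot.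
Open Scope R_scope.

(* s(n): number of 1s in the binary expansion of n (fuel n suffices). *)
Fixpoint binsum_aux (fuel n : nat) : nat :=
  match fuel with
  | O => O
  | S f => (n mod 2 + binsum_aux f (n / 2))%nat
  end.
Definition binsum (n : nat) : nat := binsum_aux n n.

Definition count_diff (j : Z) (t N : nat) : nat :=
  length (filter (fun n => Z.eqb (Z.of_nat (binsum (n + t)) - Z.of_nat (binsum n)) j)
                 (seq 0 N)).

Definition delta (j : Z) (t : nat) : R :=
  real (Lim_seq (fun N => INR (count_diff j t N) / INR N)).

(* r-th moment sum_{j in Z} j^r delta(j,t), summed symmetrically over |j| = k *)
Definition moment (r t : nat) : R :=
  Series (fun k : nat =>
    if Nat.eqb k 0 then (0 ^ r) * delta 0 t
    else (INR k) ^ r * delta (Z.of_nat k) t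
         + (- INR k) ^ r * delta (- Z.of_nat k)%Z t).

(* Cumulants from moments, via the coefficient identity of
   log (sum_r m_r x^r / r!) = sum_j kappa_j x^j / j!  (with m_0 = 1):
   kappa_0 = 0,  kappa_n = m_n - sum_{k=1}^{n-1} C(n-1,k-1) kappa_k m_{n-k}. *)
Fixpoint cum_aux (m : nat -> R) (fuel n : nat) : R :=
  match fuel with
  | O => 0
  | S f =>
    if Nat.eqb n 0 then 0
    else m n - fold_right Rplus 0
           (map (fun k => Binomial.C (n - 1) (k - 1) * cum_aux m f k * m (n - k)%nat)
                (seq 1 (n - 1)))
  end.
Definition cumulant_of (m : nat -> R) (n : nat) : R := cum_aux m n n.

Definition kappa (j t : nat) : R := cumulant_of (fun r => moment r t) j.

Definition D (t : nat) : R := kappa 2 t - kappa 3 t / 3.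

(* Main.v *)
Require Import Defs.
From Stdlib Require Import Reals ZArith Arith List Lra Lia Psatz.
From Coquelicot Require Import Coquelicot.
Require Import Defs.
Open Scope R_scope.

Lemma binsum_aux_0 f : binsum_aux f 0 = 0%nat.
Proof. induction f; simpl; auto. Qed.

Lemma binsum_aux_fuel : forall f1 f2 n, (n <= f1)%nat -> (n <= f2)%nat ->
  binsum_aux f1 n = binsum_aux f2 n.
Proof.
  induction f1 as [|f1 IH]; intros f2 n H1 H2.
  - assert (n = 0%nat) by lia; subst. now rewrite (binsum_aux_0 f2).
  - destruct f2 as [|f2].
    + assert (n = 0%nat) by lia; subst. now rewrite (binsum_aux_0 (S f1)).
    + cbn [binsum_aux]. f_equal. destruct (Nat.eq_dec n 0) as [->|Hn].
      * change (0/2)%nat with 0%nat. now rewrite !binsum_aux_0.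
      * assert (n / 2 < n)%nat by (apply Nat.div_lt; lia). apply IH; lia.
Qed.

Lemma binsum_2nb n b : (b < 2)%nat -> binsum (2 * n + b) = (b + binsum n)%nat.
Proof.
  intros Hb. unfold binsum.
  destruct (2 * n + b)%nat eqn:E.
  - assert (n = 0%nat /\ b = 0%nat) as [-> ->] by lia. reflexivity.
  - cbn [binsum_aux]. rewrite <- E.
    replace ((2 * n + b) mod 2)%nat with b.
    2:{ rewrite Nat.add_comm, Nat.mul_comm, Nat.Div0.mod_add. rewrite Nat.mod_small; lia. }
    replace ((2 * n + b) / 2)%nat with n.
    2:{ rewrite Nat.add_comm, Nat.mul_comm, Nat.div_add by lia. rewrite Nat.div_small; lia. }
    f_equal. apply binsum_aux_fuel; lia.
Qed.

Lemma binsum_double n : binsum (2 * n) = binsum n.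
Proof. pose proof (binsum_2nb n 0). rewrite Nat.add_0_r in H. apply H; lia. Qed.
Lemma binsum_double1 n : binsum (2 * n + 1) = S (binsum n).
Proof. apply binsum_2nb; lia. Qed.

Lemma binsum_0 : binsum 0 = 0%nat.
Proof. reflexivity. Qed.

Lemma binsum_block : forall l a m, (m < 2 ^ l)%nat ->
  binsum (a * 2 ^ l + m) = (binsum a + binsum m)%nat.
Proof.
  induction l as [|l IH]; intros a m Hm.
  - simpl in Hm. assert (m = 0%nat) by lia; subst. rewrite Nat.pow_0_r, Nat.mul_1_r, Nat.add_0_r, binsum_0. lia.
  - pose proof (Nat.div_mod m 2 ltac:(lia)) as Em.
    pose proof (Nat.mod_upper_bound m 2 ltac:(lia)).
    assert (m / 2 < 2 ^ l)%nat.
    { rewrite Nat.pow_succ_r' in Hm. apply Nat.Div0.div_lt_upper_bound. lia. }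
    replace (a * 2 ^ S l + m)%nat with (2 * (a * 2 ^ l + m / 2) + m mod 2)%nat
      by (rewrite Nat.pow_succ_r'; lia).
    rewrite binsum_2nb, IH by lia.
    assert (binsum m = (m mod 2 + binsum (m / 2))%nat) as Hb.
    { rewrite Em at 1. apply binsum_2nb; lia. }
    lia.
Qed.

Lemma binsum_le : forall l m, (m < 2 ^ l)%nat -> (binsum m <= l)%nat.
Proof.
  induction l as [|l IH]; intros m Hm.
  - simpl in Hm. assert (m = 0%nat) by lia; subst. rewrite binsum_0. lia.
  - pose proof (Nat.div_mod m 2 ltac:(lia)) as Em.
    pose proof (Nat.mod_upper_bound m 2 ltac:(lia)).
    assert (m / 2 < 2 ^ l)%nat.
    { rewrite Nat.pow_succ_r' in Hm. apply Nat.Div0.div_lt_upper_bound. lia. }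
    assert (binsum m = (m mod 2 + binsum (m / 2))%nat) as Hb.
    { rewrite Em at 1. apply binsum_2nb; lia. }
    specialize (IH _ H0). lia.
Qed.

Definition fd (t n : nat) : Z := (Z.of_nat (binsum (n + t)) - Z.of_nat (binsum n))%Z.

Lemma fd_even_even t n : fd (2 * t) (2 * n) = fd t n.
Proof. unfold fd. replace (2 * n + 2 * t)%nat with (2 * (n + t))%nat by lia.
  now rewrite !binsum_double. Qed.
Lemma fd_even_odd t n : fd (2 * t) (2 * n + 1) = fd t n.
Proof. unfold fd. replace (2 * n + 1 + 2 * t)%nat with (2 * (n + t) + 1)%nat by lia.
  rewrite !binsum_double1. lia. Qed.
Lemma fd_odd_even t n : fd (2 * t + 1) (2 * n) = (fd t n + 1)%Z.
Proof. unfold fd. replace (2 * n + (2 * t + 1))%nat with (2 * (n + t) + 1)%nat by lia.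
  rewrite binsum_double1, binsum_double. lia. Qed.
Lemma fd_odd_odd t n : fd (2 * t + 1) (2 * n + 1) = (fd (t + 1) n - 1)%Z.
Proof. unfold fd. replace (2 * n + 1 + (2 * t + 1))%nat with (2 * (n + (t + 1)))%nat by lia.
  rewrite binsum_double1, binsum_double. lia. Qed.

Lemma fd_block t l c m : (m + t < 2 ^ l)%nat -> fd t (c * 2 ^ l + m) = fd t m.
Proof. intros H. unfold fd. replace (c * 2 ^ l + m + t)%nat with (c * 2 ^ l + (m + t))%nat by lia.
  rewrite !binsum_block by lia. lia. Qed.

Lemma fd_bound t l m : (m + t < 2 ^ l)%nat -> (Z.abs (fd t m) <= Z.of_nat l)%Z.
Proof. intros H. unfold fd. pose proof (binsum_le l (m + t) H).
  pose proof (binsum_le l m ltac:(lia)). lia. Qed.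

Fixpoint rsum (g : nat -> R) (n : nat) : R :=
  match n with O => 0 | S n => rsum g n + g n end.

Lemma rsum_ext g h n : (forall i, (i < n)%nat -> g i = h i) -> rsum g n = rsum h n.
Proof. induction n; intros H; simpl; auto. rewrite IHn by (intros; apply H; lia). now rewrite H by lia. Qed.

Lemma rsum_split g a b : rsum g (a + b) = rsum g a + rsum (fun i => g (a + i)%nat) b.
Proof. induction b; simpl. rewrite Nat.add_0_r; lra. rewrite Nat.add_succ_r; simpl. rewrite IHb; lra. Qed.

Lemma rsum_nonneg g n : (forall i, 0 <= g i) -> 0 <= rsum g n.
Proof. intros H; induction n; simpl; [lra|]. specialize (H n); lra. Qed.

Lemma rsum_le g h n : (forall i, (i < n)%nat -> g i <= h i) -> rsum g n <= rsum h n.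
Proof. induction n; intros H; simpl; [lra|]. assert (g n <= h n) by (apply H; lia).
  assert (rsum g n <= rsum h n) by (apply IHn; intros; apply H; lia). lra. Qed.

Lemma rsum_plus g h n : rsum (fun i => g i + h i) n = rsum g n + rsum h n.
Proof. induction n; simpl; lra. Qed.
Lemma rsum_scal c g n : rsum (fun i => c * g i) n = c * rsum g n.
Proof. induction n; simpl; lra. Qed.
Lemma rsum_const c n : rsum (fun _ => c) n = c * INR n.
Proof. induction n; simpl rsum; [simpl; lra|]. rewrite S_INR; lra. Qed.

Lemma rsum_mono_n g a b : (forall i, 0 <= g i) -> (a <= b)%nat -> rsum g a <= rsum g b.
Proof. intros H Hab. replace b with (a + (b - a))%nat by lia. rewrite rsum_split.
  pose proof (rsum_nonneg (fun i => g (a + i)%nat) (b - a) ltac:(intros; apply H)). lra. Qed.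

Lemma rsum_01 g n : (forall i, 0 <= g i <= 1) -> rsum g n <= INR n.
Proof. intros H. rewrite <- (Rmult_1_l (INR n)), <- rsum_const. apply rsum_le. intros; apply H. Qed.

Definition ind (b : bool) : R := if b then 1 else 0.
Lemma ind_01 b : 0 <= ind b <= 1.
Proof. destruct b; simpl; lra. Qed.


Lemma count_diff_rsum j t N :
  INR (count_diff j t N) = rsum (fun n => ind (Z.eqb (fd t n) j)) N.
Proof.
  induction N; [reflexivity|]. unfold count_diff in *. rewrite seq_S, filter_app, length_app.
  rewrite plus_INR, IHN. simpl rsum. f_equal. simpl. unfold fd. destruct Z.eqb; simpl; lra.
Qed.

Definition gi (j : Z) (t : nat) (n : nat) : R := ind (Z.eqb (fd t n) j).
Definition cq (j : Z) (t l : nat) : R := rsum (gi j t) (2 ^ l - t).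

Lemma gi_01 j t n : 0 <= gi j t n <= 1.
Proof. apply ind_01. Qed.

Lemma cq_bounds j t l : 0 <= cq j t l <= INR (2 ^ l - t).
Proof. split. apply rsum_nonneg; intros; apply gi_01. apply rsum_01; intros; apply gi_01. Qed.

Lemma block_bounds j t l c :
  cq j t l <= rsum (fun i => gi j t (c * 2 ^ l + i)%nat) (2 ^ l) <= cq j t l + INR t.
Proof.
  set (X := (2 ^ l - t)%nat).
  assert (Es : rsum (fun i => gi j t (c * 2 ^ l + i)%nat) (2 ^ l) =
     rsum (fun i => gi j t (c * 2 ^ l + i)%nat) (X + (2 ^ l - X))) by (f_equal; lia).
  rewrite Es, rsum_split.
  assert (E : rsum (fun i => gi j t (c * 2 ^ l + i)%nat) X = cq j t l).
  { unfold cq. apply rsum_ext. intros i Hi. unfold gi. rewrite fd_block; auto. lia. }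
  rewrite E.
  pose proof (rsum_nonneg (fun i => gi j t (c * 2 ^ l + (X + i))%nat) (2 ^ l - X)
     ltac:(intros; apply gi_01)).
  pose proof (rsum_01 (fun i => gi j t (c * 2 ^ l + (X + i))%nat) (2 ^ l - X)
     ltac:(intros; apply gi_01)).
  assert (INR (2 ^ l - X) <= INR t) by (apply le_INR; lia). split; lra.
Qed.

Lemma multi_bounds j t l a :
  INR a * cq j t l <= rsum (gi j t) (a * 2 ^ l) <= INR a * (cq j t l + INR t).
Proof.
  induction a.
  - simpl. lra.
  - replace (S a * 2 ^ l)%nat with (a * 2 ^ l + 2 ^ l)%nat by lia.
    rewrite rsum_split, S_INR. pose proof (block_bounds j t l a). split; nra.
Qed.

Lemma count_bounds j t l N :
  INR (N / 2 ^ l) * cq j t l <= INR (count_diff j t N) <=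
  INR (N / 2 ^ l) * (cq j t l + INR t) + INR (N mod 2 ^ l).
Proof.
  rewrite count_diff_rsum. fold (gi j t).
  assert (Hp : (2 ^ l <> 0)%nat) by (apply Nat.pow_nonzero; lia).
  pose proof (Nat.div_mod N (2 ^ l) Hp) as E.
  replace (rsum (gi j t) N) with (rsum (gi j t) (N / 2 ^ l * 2 ^ l + N mod 2 ^ l)).
  2:{ f_equal. lia. }
  rewrite rsum_split.
  pose proof (multi_bounds j t l (N / 2 ^ l)).
  pose proof (rsum_nonneg (fun i => gi j t (N / 2 ^ l * 2 ^ l + i)%nat) (N mod 2 ^ l)
     ltac:(intros; apply gi_01)).
  pose proof (rsum_01 (fun i => gi j t (N / 2 ^ l * 2 ^ l + i)%nat) (N mod 2 ^ l)
     ltac:(intros; apply gi_01)).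
  split; lra.
Qed.

Lemma real_bound (A B P C S T : R) :
  0 < P -> 0 <= A -> 0 <= B -> B < P -> 0 <= C <= P -> 0 <= T ->
  0 < A * P + B ->
  A * C <= S <= A * (C + T) + B ->
  Rabs (S / (A * P + B) - C / P) <= T / P + P / (A * P + B).
Proof.
  intros HP HA HB HBP HC HT HN HS.
  set (N := A * P + B) in *.
  assert (HNP : 0 < N * P) by nra.
  replace (S / N - C / P) with ((S * P - C * N) * / (N * P)) by (field; lra).
  replace (T / P + P / N) with ((T * N + P * P) * / (N * P)) by (field; lra).
  assert (Hi : 0 <= / (N * P)) by (apply Rlt_le, Rinv_0_lt_compat; lra).
  assert (H1 : S * P - C * N <= T * N + P * P) by (unfold N in *; nra).
  assert (H2 : - (T * N + P * P) <= S * P - C * N) by (unfold N in *; nra).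
  apply Rabs_le. split.
  - rewrite Ropp_mult_distr_l. apply Rmult_le_compat_r; auto.
  - apply Rmult_le_compat_r; auto.
Qed.

Definition cN (j : Z) (t N : nat) : R := INR (count_diff j t N) / INR N.
Definition ql (j : Z) (t l : nat) : R := cq j t l / 2 ^ l.

Lemma pow2_INR l : INR (2 ^ l) = 2 ^ l.
Proof. rewrite pow_INR. reflexivity. Qed.

Lemma cN_ql j t l N : (1 <= N)%nat ->
  Rabs (cN j t N - ql j t l) <= INR t / 2 ^ l + 2 ^ l / INR N.
Proof.
  intros HN. unfold cN, ql.
  assert (Hp : (2 ^ l <> 0)%nat) by (apply Nat.pow_nonzero; lia).
  pose proof (Nat.div_mod N (2 ^ l) Hp) as E.
  pose proof (Nat.mod_upper_bound N (2 ^ l) Hp) as Hm.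
  assert (EN : INR N = INR (N / 2 ^ l) * 2 ^ l + INR (N mod 2 ^ l)).
  { rewrite <- pow2_INR, <- mult_INR, <- plus_INR. f_equal. lia. }
  rewrite EN.
  pose proof (count_bounds j t l N).
  pose proof (cq_bounds j t l).
  assert (INR (2 ^ l - t) <= 2 ^ l) by (rewrite <- pow2_INR; apply le_INR; lia).
  apply real_bound; try lra.
  - apply pow_lt; lra.
  - apply pos_INR.
  - apply pos_INR.
  - rewrite <- pow2_INR; apply lt_INR; lia.
  - apply pos_INR.
  - rewrite <- EN. apply lt_0_INR; lia.
Qed.

Lemma INR_le_pow2 n : INR n <= 2 ^ n.
Proof. induction n. simpl; lra. rewrite S_INR. simpl.
  assert (1 <= 2 ^ n) by (apply pow_R1_Rle; lra). lra. Qed.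

Lemma pow2_pos l : 0 < 2 ^ l.
Proof. apply pow_lt; lra. Qed.

Lemma small_pow (t : R) e : 0 < e -> exists l, t / 2 ^ l < e.
Proof.
  intros He. destruct (INR_archimed e t He) as [n Hn]. exists n.
  pose proof (INR_le_pow2 n). pose proof (pow2_pos n).
  apply Rmult_lt_reg_r with (2 ^ n); auto. unfold Rdiv. rewrite Rmult_assoc, Rinv_l by lra.
  nra.
Qed.

Lemma large_N (P e : R) : 0 < e -> exists N0, (1 <= N0)%nat /\ forall N, (N0 <= N)%nat -> P / INR N < e.
Proof.
  intros He. destruct (INR_archimed e P He) as [n Hn]. exists (S n). split; [lia|].
  intros N HN. assert (INR (S n) <= INR N) by (apply le_INR; auto). rewrite S_INR in H.
  pose proof (pos_INR n). assert (0 < INR N) by lra.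
  apply Rmult_lt_reg_r with (INR N); auto. unfold Rdiv. rewrite Rmult_assoc, Rinv_l by lra.
  nra.
Qed.

Lemma cN_cauchy j t : ex_lim_seq_cauchy (cN j t).
Proof.
  intros [eps Heps]. simpl.
  destruct (small_pow (INR t) (eps / 4)) as [l Hl]; [lra|].
  destruct (large_N (2 ^ l) (eps / 4)) as [N0 [HN0 HN]]; [lra|].
  exists N0. intros n m Hn Hm.
  pose proof (cN_ql j t l n ltac:(lia)). pose proof (cN_ql j t l m ltac:(lia)).
  pose proof (HN n Hn). pose proof (HN m Hm).
  replace (cN j t n - cN j t m) with ((cN j t n - ql j t l) - (cN j t m - ql j t l)) by ring.
  eapply Rle_lt_trans. apply Rabs_triang. rewrite Rabs_Ropp. lra.
Qed.

Lemma delta_lim j t : is_lim_seq (cN j t) (delta j t).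
Proof.
  assert (H : ex_finite_lim_seq (cN j t)) by (apply ex_lim_seq_cauchy_corr, cN_cauchy).
  pose proof (Lim_seq_correct' _ H) as H2.
  destruct H as [L HL]. pose proof (is_lim_seq_unique _ _ HL) as E.
  unfold delta. fold (cN j t). rewrite E. simpl. exact HL.
Qed.

Lemma ql_le_delta j t l : ql j t l <= delta j t.
Proof.
  set (phi := fun a => (S a * 2 ^ l)%nat).
  assert (Hphi : filterlim phi eventually eventually).
  { apply eventually_subseq. intros n. unfold phi.
    assert (2 ^ l <> 0)%nat by (apply Nat.pow_nonzero; lia). nia. }
  pose proof (is_lim_seq_subseq _ _ phi Hphi (delta_lim j t)) as H.
  assert (Hle : forall a, ql j t l <= cN j t (phi a)).
  { intros a. unfold cN, ql, phi. pose proof (count_bounds j t l (S a * 2 ^ l)) as [H1 _].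
    assert (2 ^ l <> 0)%nat by (apply Nat.pow_nonzero; lia).
    rewrite Nat.div_mul in H1 by auto.
    rewrite mult_INR, pow2_INR. pose proof (pow2_pos l).
    assert (0 < INR (S a)) by (apply lt_0_INR; lia).
    apply Rmult_le_reg_r with (INR (S a) * 2 ^ l). nra.
    unfold Rdiv. replace (cq j t l * / 2 ^ l * (INR (S a) * 2 ^ l)) with (INR (S a) * cq j t l)
      by (field; lra).
    rewrite Rmult_assoc, Rinv_l by nra. lra. }
  pose proof (is_lim_seq_le _ _ _ _ Hle (is_lim_seq_const _) H). simpl in H0. exact H0.
Qed.

Definition zt (h : Z -> R) (k : nat) : R :=
  if Nat.eqb k 0 then h 0%Z else h (Z.of_nat k) + h (- Z.of_nat k)%Z.

Lemma zt_ext h1 h2 k : (forall j, h1 j = h2 j) -> zt h1 k = zt h2 k.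
Proof. intros H; unfold zt; destruct Nat.eqb; rewrite ?H; auto. Qed.
Lemma zt_plus h1 h2 k : zt (fun j => h1 j + h2 j) k = zt h1 k + zt h2 k.
Proof. unfold zt; destruct Nat.eqb; lra. Qed.
Lemma zt_minus h1 h2 k : zt (fun j => h1 j - h2 j) k = zt h1 k - zt h2 k.
Proof. unfold zt; destruct Nat.eqb; lra. Qed.
Lemma zt_scal c h k : zt (fun j => c * h j) k = c * zt h k.
Proof. unfold zt; destruct Nat.eqb; lra. Qed.
Lemma zt_nonneg h k : (forall j, 0 <= h j) -> 0 <= zt h k.
Proof. intros H; unfold zt; destruct Nat.eqb; [apply H|]. pose proof (H (Z.of_nat k)); pose proof (H (- Z.of_nat k)%Z); lra. Qed.

Lemma zsum_ext h1 h2 n : (forall j, h1 j = h2 j) -> rsum (zt h1) n = rsum (zt h2) n.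
Proof. intros H; apply rsum_ext; intros; apply zt_ext; auto. Qed.
Lemma zsum_plus h1 h2 n : rsum (zt (fun j => h1 j + h2 j)) n = rsum (zt h1) n + rsum (zt h2) n.
Proof. rewrite <- rsum_plus. apply rsum_ext; intros; apply zt_plus. Qed.
Lemma zsum_minus h1 h2 n : rsum (zt (fun j => h1 j - h2 j)) n = rsum (zt h1) n - rsum (zt h2) n.
Proof. induction n; simpl; [lra|]. rewrite IHn, zt_minus. lra. Qed.
Lemma zsum_scal c h n : rsum (zt (fun j => c * h j)) n = c * rsum (zt h) n.
Proof. rewrite <- rsum_scal. apply rsum_ext; intros; apply zt_scal. Qed.

Lemma zsum_zero h n : (forall j, h j = 0) -> rsum (zt h) n = 0.
Proof. intros H. induction n; simpl; auto. rewrite IHn. unfold zt; destruct Nat.eqb; rewrite !H; ring. Qed.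

Lemma zsum_ind (G : Z -> R) z K :
  rsum (zt (fun j => G j * ind (Z.eqb z j))) (S K) =
  if Z.leb (Z.abs z) (Z.of_nat K) then G z else 0.
Proof.
  induction K.
  - simpl. unfold zt. simpl. unfold ind.
    destruct (Z.eqb_spec z 0); subst; simpl; [lra|].
    destruct (Z.leb_spec (Z.abs z) 0); [lia|lra].
  - change (rsum (zt (fun j => G j * ind (z =? j)%Z)) (S (S K))) with
      (rsum (zt (fun j => G j * ind (z =? j)%Z)) (S K) + zt (fun j => G j * ind (z =? j)%Z) (S K)).
    rewrite IHK. unfold zt. simpl Nat.eqb. unfold ind.
    destruct (Z.eqb_spec z (Z.of_nat (S K))); destruct (Z.eqb_spec z (- Z.of_nat (S K))); try lia.
    + subst. destruct (Z.leb_spec (Z.abs (Z.of_nat (S K))) (Z.of_nat K)); [lia|].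
      destruct (Z.leb_spec (Z.abs (Z.of_nat (S K))) (Z.of_nat (S K))); [lra|lia].
    + subst. destruct (Z.leb_spec (Z.abs (- Z.of_nat (S K))) (Z.of_nat K)); [lia|].
      destruct (Z.leb_spec (Z.abs (- Z.of_nat (S K))) (Z.of_nat (S K))); [lra|lia].
    + destruct (Z.leb_spec (Z.abs z) (Z.of_nat K));
      destruct (Z.leb_spec (Z.abs z) (Z.of_nat (S K))); try lra; lia.
Qed.

Lemma zsum_swap (G : Z -> R) t M K :
  (forall n, (n < M)%nat -> (Z.abs (fd t n) <= Z.of_nat K)%Z) ->
  rsum (zt (fun j => G j * rsum (gi j t) M)) (S K) = rsum (fun n => G (fd t n)) M.
Proof.
  induction M; intros H.
  - change (rsum (fun n => G (fd t n)) 0) with 0. apply zsum_zero. intros; simpl; ring.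
  - change (rsum (fun n => G (fd t n)) (S M)) with (rsum (fun n => G (fd t n)) M + G (fd t M)).
    rewrite <- IHM by (intros; apply H; lia).
    transitivity (rsum (zt (fun j => G j * rsum (gi j t) M + G j * gi j t M)) (S K)).
    { apply zsum_ext; intros j. simpl. ring. }
    rewrite zsum_plus. f_equal. unfold gi. rewrite zsum_ind.
    specialize (H M ltac:(lia)). destruct (Z.leb_spec (Z.abs (fd t M)) (Z.of_nat K)); [lra|lia].
Qed.

Lemma zsum_count_le t M K :
  rsum (zt (fun j => rsum (gi j t) M)) (S K) <= INR M.
Proof.
  induction M.
  - right. rewrite zsum_zero; [simpl; ring|]. intros; simpl; ring.
  - transitivity (rsum (zt (fun j => 1 * rsum (gi j t) M + 1 * gi j t M)) (S K)).
    { right. apply zsum_ext; intros j. simpl. ring. }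
    rewrite zsum_plus, S_INR. unfold gi at 2. rewrite zsum_ind.
    assert (rsum (zt (fun j => 1 * rsum (gi j t) M)) (S K) <= INR M).
    { erewrite zsum_ext; [apply IHM|]. intros; simpl; ring. }
    destruct Z.leb; lra.
Qed.

Lemma zsum_lim (u : nat -> Z -> R) (v : Z -> R) n :
  (forall j, is_lim_seq (fun N => u N j) (v j)) ->
  is_lim_seq (fun N => rsum (zt (u N)) n) (rsum (zt v) n).
Proof.
  intros H. induction n.
  - simpl. apply is_lim_seq_const.
  - simpl. apply is_lim_seq_plus'; auto. unfold zt. destruct Nat.eqb; auto.
    apply is_lim_seq_plus'; auto.
Qed.

Lemma delta_nonneg j t : 0 <= delta j t.
Proof. pose proof (ql_le_delta j t 0). unfold ql, cq in H. pose proof (rsum_nonneg (gi j t) (2 ^ 0 - t) ltac:(intros; apply gi_01)).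
  simpl pow in H. lra. Qed.

Lemma zsum_delta_le t K : rsum (zt (fun j => delta j t)) (S K) <= 1.
Proof.
  pose proof (zsum_lim (fun N j => cN j t N) (fun j => delta j t) (S K) (fun j => delta_lim j t)) as H.
  assert (Hev : eventually (fun N => rsum (zt (fun j => cN j t N)) (S K) <= 1)).
  { exists 1%nat. intros N HN. unfold cN.
    assert (0 < INR N) by (apply lt_0_INR; lia).
    transitivity (rsum (zt (fun j => / INR N * rsum (gi j t) N)) (S K)).
    { right. apply zsum_ext. intros j. rewrite count_diff_rsum. fold (gi j t). unfold Rdiv. ring. }
    rewrite zsum_scal. pose proof (zsum_count_le t N K).
    apply Rmult_le_reg_l with (INR N); auto. rewrite <- Rmult_assoc, Rinv_r by lra. lra. }
  pose proof (is_lim_seq_le_loc _ _ _ _ Hev H (is_lim_seq_const 1)). simpl in H0. exact H0.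
Qed.

Lemma zsum_ql t l K : (l <= K)%nat ->
  rsum (zt (fun j => ql j t l)) (S K) = INR (2 ^ l - t) / 2 ^ l.
Proof.
  intros HK. unfold ql, cq.
  transitivity (rsum (zt (fun j => / 2 ^ l * (1 * rsum (gi j t) (2 ^ l - t)))) (S K)).
  { apply zsum_ext; intros; unfold Rdiv; ring. }
  rewrite zsum_scal, zsum_swap. rewrite rsum_const. unfold Rdiv; ring.
  intros n Hn. pose proof (fd_bound t l n ltac:(lia)). lia.
Qed.

Lemma INR_sub_ge a b : INR a - INR b <= INR (a - b).
Proof. destruct (Nat.le_gt_cases b a). rewrite minus_INR by auto; lra.
  assert (INR a < INR b) by (apply lt_INR; auto). pose proof (pos_INR (a - b)). lra. Qed.

Lemma tail_bound t l K : (l <= K)%nat ->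
  rsum (zt (fun j => delta j t - ql j t l)) (S K) <= INR t / 2 ^ l.
Proof.
  intros HK. rewrite zsum_minus, zsum_ql by auto.
  pose proof (zsum_delta_le t K). pose proof (INR_sub_ge (2 ^ l) t). rewrite pow2_INR in H0.
  pose proof (pow2_pos l).
  assert (INR (2 ^ l - t) / 2 ^ l >= 1 - INR t / 2 ^ l).
  { unfold Rdiv. apply Rle_ge. apply Rmult_le_reg_r with (2 ^ l); auto.
    rewrite Rmult_assoc, Rinv_l by lra. field_simplify; lra. }
  lra.
Qed.

Lemma ql_zero j t l : (Z.of_nat l < Z.abs j)%Z -> ql j t l = 0.
Proof.
  intros H. unfold ql, cq. replace (rsum (gi j t) (2 ^ l - t)) with 0. unfold Rdiv; ring.
  rewrite <- (Rmult_0_l (INR (2 ^ l - t))), <- rsum_const. apply rsum_ext. intros i Hi.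
  unfold gi, ind. pose proof (fd_bound t l i ltac:(lia)). destruct (Z.eqb_spec (fd t i) j); [lia|auto].
Qed.

Lemma zt_delta_bound t k : (1 <= k)%nat -> zt (fun j => delta j t) k <= INR t / 2 ^ (k - 1).
Proof.
  intros Hk. pose proof (tail_bound t (k - 1) k ltac:(lia)).
  destruct k; [lia|].
  set (h := fun j => delta j t - ql j t (S k - 1)) in *.
  change (rsum (zt h) (S k) + zt h (S k) <= INR t / 2 ^ (S k - 1)) in H.
  assert (0 <= rsum (zt h) (S k)).
  { apply rsum_nonneg. intros; apply zt_nonneg. intros j. unfold h. pose proof (ql_le_delta j t (S k - 1)); lra. }
  replace (zt (fun j => delta j t) (S k)) with (zt h (S k)). lra.
  unfold zt, h. cbn [Nat.eqb]. rewrite !ql_zero by lia. ring.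
Qed.

Definition E (l : nat) (G : Z -> R) (t : nat) : R := rsum (fun n => G (fd t n)) (2 ^ l - t) / 2 ^ l.

Lemma E_zsum l G t K : (l <= K)%nat ->
  E l G t = rsum (zt (fun j => G j * ql j t l)) (S K).
Proof.
  intros HK. unfold E, ql, cq.
  transitivity (/ 2 ^ l * rsum (zt (fun j => G j * rsum (gi j t) (2 ^ l - t))) (S K)).
  - rewrite zsum_swap. unfold Rdiv; ring. intros n Hn. pose proof (fd_bound t l n ltac:(lia)). lia.
  - rewrite <- zsum_scal. apply zsum_ext. intros; unfold Rdiv; ring.
Qed.

Lemma cube_bound k : INR k ^ 3 <= 21 * (3 / 2) ^ k.
Proof.
  assert (Hbig : forall n, INR (n + 7) ^ 3 <= 21 * (3 / 2) ^ (n + 7)).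
  { induction n.
    - simpl. lra.
    - replace (S n + 7)%nat with (S (n + 7)) by lia. rewrite S_INR. simpl pow at 2.
      assert (7 <= INR (n + 7)) by (rewrite plus_INR; simpl; pose proof (pos_INR n); lra).
      set (y := INR (n + 7)) in *. 
      assert ((y + 1) ^ 3 <= 3 / 2 * y ^ 3) by (simpl; nra).
      lra. }
  destruct (Nat.le_gt_cases 7 k).
  - replace k with ((k - 7) + 7)%nat by lia. apply Hbig.
  - do 7 (destruct k as [|k]; [simpl; lra|]). lia.
Qed.

Lemma pw_bound r j : (1 <= r <= 3)%nat -> Rabs (IZR j ^ r) <= Rabs (IZR j) ^ 3.
Proof.
  intros Hr. rewrite <- RPow_abs.
  destruct (Z.eq_dec j 0) as [->|Hj].
  - rewrite Rabs_R0. destruct r; [lia|]. simpl. lra.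
  - apply Rle_pow; [|lia]. rewrite <- abs_IZR. apply IZR_le. lia.
Qed.

Lemma zt_pow_bound r h k : (1 <= r <= 3)%nat -> (forall j, 0 <= h j) ->
  Rabs (zt (fun j => IZR j ^ r * h j) k) <= INR k ^ 3 * zt h k.
Proof.
  intros Hr Hh. unfold zt. destruct (Nat.eqb_spec k 0) as [->|Hk].
  - simpl INR. rewrite Rabs_mult. pose proof (pw_bound r 0 Hr). rewrite Rabs_R0 in H.
    simpl in H. rewrite (Rabs_pos_eq (h 0%Z)) by auto. pose proof (Rabs_pos (IZR 0 ^ r)).
    simpl. pose proof (Hh 0%Z). nra.
  - eapply Rle_trans. apply Rabs_triang. rewrite !Rabs_mult.
    rewrite (Rabs_pos_eq (h _)) by auto. rewrite (Rabs_pos_eq (h (- _)%Z)) by auto.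
    pose proof (pw_bound r (Z.of_nat k) Hr). pose proof (pw_bound r (- Z.of_nat k)%Z Hr).
    rewrite opp_IZR, Rabs_Ropp in H0. rewrite <- INR_IZR_INZ in H, H0.
    rewrite (Rabs_pos_eq (INR k) (pos_INR k)) in H, H0.
    rewrite opp_IZR, <- INR_IZR_INZ.
    pose proof (Hh (Z.of_nat k)). pose proof (Hh (- Z.of_nat k)%Z). nra.
Qed.

Lemma rsum_abs g n : Rabs (rsum g n) <= rsum (fun k => Rabs (g k)) n.
Proof. induction n; simpl. rewrite Rabs_R0; lra.
  eapply Rle_trans. apply Rabs_triang. lra. Qed.

Definition xq : R := 3 / 4.

Lemma geo_tail l n : rsum (fun k => if Nat.ltb l k then xq ^ k else 0) n =
  4 * (xq ^ (S l) - xq ^ (Nat.max n (S l))).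
Proof.
  induction n.
  - cbn [rsum Nat.max]. ring.
  - simpl rsum. rewrite IHn. destruct (Nat.ltb_spec l n).
    + rewrite Nat.max_l by lia. rewrite Nat.max_l by lia. change (xq ^ S n) with (xq * xq ^ n). unfold xq. lra.
    + rewrite Nat.max_r by lia. rewrite Nat.max_r by lia. ring.
Qed.

Lemma xq_eq k : xq ^ k = (3/2) ^ k / 2 ^ k.
Proof. induction k. simpl; field. simpl. rewrite IHk. unfold xq. field. apply pow_nonzero; lra. Qed.

Lemma xq_pos k : 0 < xq ^ k.
Proof. apply pow_lt; unfold xq; lra. Qed.

Section Moment.
Variable r : nat.
Hypothesis Hr : (1 <= r <= 3)%nat.
Variable t : nat.

Definition am (k : nat) : R := zt (fun j => IZR j ^ r * delta j t) k.

Lemma am_bound k : Rabs (am k) <= 42 * INR t * xq ^ k.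
Proof.
  unfold am. eapply Rle_trans. apply zt_pow_bound; [auto | intros j; apply delta_nonneg].
  destruct k.
  - simpl. pose proof (pos_INR t). pose proof (xq_pos 0). simpl in H0. nra.
  - pose proof (zt_delta_bound t (S k) ltac:(lia)). pose proof (cube_bound (S k)).
    replace (S k - 1)%nat with k in H by lia.
    assert (0 <= zt (fun j => delta j t) (S k)) by (apply zt_nonneg; intros j; apply delta_nonneg).
    assert (0 <= INR (S k) ^ 3) by (apply pow_le, pos_INR).
    pose proof (pow2_pos k). pose proof (pos_INR t).
    assert (INR (S k) ^ 3 * zt (fun j => delta j t) (S k) <= 21 * (3/2) ^ (S k) * (INR t / 2 ^ k)).
    { apply Rmult_le_compat; auto. }
    eapply Rle_trans. exact H5.
    replace (xq ^ S k) with ((3/2) ^ S k / 2 ^ S k) by (rewrite xq_eq; reflexivity).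
    simpl (2 ^ S k). unfold Rdiv. rewrite Rinv_mult. right. field. lra.
Qed.

Lemma am_ex : ex_series am.
Proof.
  apply (@ex_series_le R_AbsRing R_CompleteNormedModule am (fun k => 42 * INR t * xq ^ k)).
  - intros; apply am_bound.
  - apply (ex_series_scal_l (42 * INR t) (fun k => xq ^ k)).
    exists (/ (1 - xq)). apply is_series_geom. unfold xq. rewrite Rabs_pos_eq; lra.
Qed.

Lemma sum_n_rsum (a : nat -> R) n : sum_n a n = rsum a (S n).
Proof. induction n. rewrite sum_O. simpl; ring. rewrite sum_Sn, IHn. reflexivity. Qed.

Definition eps_l (l : nat) : R := 21 * INR t * xq ^ l + 168 * INR t * xq ^ (S l).

Lemma partial_close l K : (l <= K)%nat ->
  Rabs (rsum am (S K) - E l (fun j => IZR j ^ r) t) <= eps_l l.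
Proof.
  intros HK. rewrite (E_zsum l _ t K HK).
  set (bm := fun k => zt (fun j => IZR j ^ r * ql j t l) k).
  replace (rsum am (S K) - rsum bm (S K)) with (rsum (fun k => am k - bm k) (S K)).
  2:{ clear. induction (S K); simpl; auto. ring. rewrite IHn. ring. }
  eapply Rle_trans. apply rsum_abs.
  assert (Hterm : forall k, Rabs (am k - bm k) <=
     INR l ^ 3 * zt (fun j => delta j t - ql j t l) k +
     42 * INR t * (if Nat.ltb l k then xq ^ k else 0)).
  { intros k. unfold am, bm. rewrite <- zt_minus.
    erewrite zt_ext. 2:{ intros j. rewrite <- Rmult_minus_distr_l. reflexivity. }
    destruct (Nat.ltb_spec l k).
    - assert (Rabs (zt (fun j => IZR j ^ r * (delta j t - ql j t l)) k) = Rabs (am k)).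
      { unfold am, zt. destruct (Nat.eqb_spec k 0); [lia|]. rewrite !ql_zero by lia.
        f_equal. ring. }
      rewrite H0. pose proof (am_bound k).
      assert (0 <= INR l ^ 3 * zt (fun j => delta j t - ql j t l) k).
      { apply Rmult_le_pos; [apply pow_le, pos_INR|]. apply zt_nonneg; intros j.
        pose proof (ql_le_delta j t l); lra. }
      lra.
    - eapply Rle_trans. apply zt_pow_bound; auto.
      { intros j. pose proof (ql_le_delta j t l). lra. }
      assert (INR k ^ 3 <= INR l ^ 3) by (apply pow_incr; split; [apply pos_INR | apply le_INR; lia]).
      assert (0 <= zt (fun j => delta j t - ql j t l) k).
      { apply zt_nonneg. intros j. pose proof (ql_le_delta j t l). lra. }
      pose proof (pos_INR t). nra. }
  eapply Rle_trans. apply rsum_le. intros k _. apply Hterm.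
  rewrite rsum_plus, !rsum_scal, geo_tail.
  pose proof (tail_bound t l K HK).
  pose proof (xq_pos (Nat.max (S K) (S l))). pose proof (pos_INR t).
  assert (INR l ^ 3 * rsum (zt (fun j => delta j t - ql j t l)) (S K) <= INR l ^ 3 * (INR t / 2 ^ l)).
  { apply Rmult_le_compat_l; auto. apply pow_le, pos_INR. }
  assert (INR l ^ 3 * (INR t / 2 ^ l) <= 21 * INR t * xq ^ l).
  { pose proof (cube_bound l). pose proof (pow2_pos l).
    rewrite xq_eq. apply Rmult_le_reg_r with (2 ^ l); auto.
    replace (INR l ^ 3 * (INR t / 2 ^ l) * 2 ^ l) with (INR l ^ 3 * INR t) by (field; lra).
    replace (21 * INR t * ((3 / 2) ^ l / 2 ^ l) * 2 ^ l) with (21 * (3/2) ^ l * INR t) by (field; lra).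
    nra. }
  unfold eps_l. nra.
Qed.

Lemma eps_l_lim : is_lim_seq eps_l 0.
Proof.
  unfold eps_l.
  replace 0 with (21 * INR t * 0 + 168 * INR t * 0) by ring.
  apply is_lim_seq_plus'.
  - apply is_lim_seq_scal_l with (lu := Finite 0). apply is_lim_seq_geom. unfold xq; rewrite Rabs_pos_eq; lra.
  - apply is_lim_seq_scal_l with (lu := Finite 0).
    apply (is_lim_seq_incr_1 (fun l => xq ^ l) 0). apply is_lim_seq_geom. unfold xq; rewrite Rabs_pos_eq; lra.
Qed.

Lemma E_lim_series : is_lim_seq (fun l => E l (fun j => IZR j ^ r) t) (Series am).
Proof.
  pose proof (Series_correct _ am_ex) as HS.
  assert (HS' : is_lim_seq (fun K => rsum am (S K)) (Series am)).
  { eapply is_lim_seq_ext. intros; apply sum_n_rsum. exact HS. }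
  assert (Hc : forall l, Rabs (Series am - E l (fun j => IZR j ^ r) t) <= eps_l l).
  { intros l. apply Rabs_le. split.
    - assert (Hev : eventually (fun K => E l (fun j => IZR j ^ r) t - eps_l l <= rsum am (S K))).
      { exists l. intros K HK. pose proof (partial_close l K HK). apply Rabs_le_between in H. lra. }
      pose proof (is_lim_seq_le_loc _ _ _ _ Hev (is_lim_seq_const _) HS'). simpl in H. lra.
    - assert (Hev : eventually (fun K => rsum am (S K) <= E l (fun j => IZR j ^ r) t + eps_l l)).
      { exists l. intros K HK. pose proof (partial_close l K HK). apply Rabs_le_between in H. lra. }
      pose proof (is_lim_seq_le_loc _ _ _ _ Hev HS' (is_lim_seq_const _)). simpl in H. lra. }
  apply is_lim_seq_le_le with (u := fun l => Series am - eps_l l) (w := fun l => Series am + eps_l l).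
  - intros l. pose proof (Hc l). apply Rabs_le_between in H. lra.
  - replace (Finite (Series am)) with (Finite (Series am - 0)) by (f_equal; ring).
    apply is_lim_seq_minus'. apply is_lim_seq_const. apply eps_l_lim.
  - replace (Finite (Series am)) with (Finite (Series am + 0)) by (f_equal; ring).
    apply is_lim_seq_plus'. apply is_lim_seq_const. apply eps_l_lim.
Qed.

Lemma moment_series : moment r t = Series am.
Proof.
  unfold moment. apply Series_ext. intros k. unfold am, zt.
  destruct (Nat.eqb k 0); [reflexivity|].
  rewrite opp_IZR, <- INR_IZR_INZ. reflexivity.
Qed.

Lemma moment_lim : is_lim_seq (fun l => E l (fun j => IZR j ^ r) t) (moment r t).
Proof. rewrite moment_series. apply E_lim_series. Qed.

End Moment.

Lemma E_ext l G1 G2 t : (forall j, G1 j = G2 j) -> E l G1 t = E l G2 t.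
Proof. intros H. unfold E. f_equal. apply rsum_ext. intros; apply H. Qed.
Lemma E_plus l G1 G2 t : E l (fun j => G1 j + G2 j) t = E l G1 t + E l G2 t.
Proof. unfold E. rewrite rsum_plus. unfold Rdiv; ring. Qed.
Lemma E_scal l c G t : E l (fun j => c * G j) t = c * E l G t.
Proof. unfold E. rewrite rsum_scal. unfold Rdiv; ring. Qed.

Lemma rsum_double g X : rsum g (2 * X) = rsum (fun i => g (2 * i)%nat + g (2 * i + 1)%nat) X.
Proof. induction X. reflexivity. replace (2 * S X)%nat with (S (S (2 * X))) by lia.
  change (rsum g (S (S (2 * X)))) with (rsum g (2 * X) + g (2 * X)%nat + g (S (2 * X))).
  change (rsum (fun i => g (2 * i)%nat + g (2 * i + 1)%nat) (S X)) with
    (rsum (fun i => g (2 * i)%nat + g (2 * i + 1)%nat) X + (g (2 * X)%nat + g (2 * X + 1)%nat)).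
  rewrite IHX. replace (S (2 * X)) with (2 * X + 1)%nat by lia. ring. Qed.

Lemma rsum_double_m1 g X : rsum g (2 * X - 1) =
  rsum (fun i => g (2 * i)%nat) X + rsum (fun i => g (2 * i + 1)%nat) (X - 1).
Proof.
  destruct X. simpl; ring.
  replace (2 * S X - 1)%nat with (S (2 * X)) by lia. replace (S X - 1)%nat with X by lia.
  change (rsum g (S (2 * X))) with (rsum g (2 * X) + g (2 * X)%nat).
  change (rsum (fun i => g (2 * i)%nat) (S X)) with (rsum (fun i => g (2 * i)%nat) X + g (2 * X)%nat).
  rewrite rsum_double, rsum_plus. ring.
Qed.

Lemma E_even l G t : E (S l) G (2 * t) = E l G t.
Proof.
  unfold E. replace (2 ^ S l - 2 * t)%nat with (2 * (2 ^ l - t))%nat by (rewrite Nat.pow_succ_r'; lia).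
  rewrite rsum_double. 
  rewrite (rsum_ext _ (fun i => 2 * G (fd t i))) by (intros; rewrite fd_even_even, fd_even_odd; ring).
  rewrite rsum_scal. simpl pow. field. apply pow_nonzero; lra.
Qed.

Lemma E_odd l G t : E (S l) G (2 * t + 1) =
  / 2 * (E l (fun j => G (j + 1)%Z) t + E l (fun j => G (j - 1)%Z) (t + 1)).
Proof.
  unfold E. replace (2 ^ S l - (2 * t + 1))%nat with (2 * (2 ^ l - t) - 1)%nat by (rewrite Nat.pow_succ_r'; lia).
  rewrite rsum_double_m1. replace (2 ^ l - t - 1)%nat with (2 ^ l - (t + 1))%nat by lia.
  rewrite (rsum_ext _ (fun i => G (fd t i + 1)%Z) (2 ^ l - t)) by (intros; rewrite fd_odd_even; ring).
  rewrite (rsum_ext _ (fun i => G (fd (t + 1) i - 1)%Z) (2 ^ l - (t + 1))) by (intros; rewrite fd_odd_odd; ring).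
  simpl pow. field. apply pow_nonzero; lra.
Qed.

Definition pw (r : nat) (j : Z) : R := IZR j ^ r.
Definition M (r t : nat) : R := moment r t.

Lemma M_lim r t : (1 <= r <= 3)%nat -> is_lim_seq (fun l => E l (pw r) t) (M r t).
Proof. intros Hr. apply moment_lim; auto. Qed.

Lemma one_lim t : is_lim_seq (fun l => E l (fun _ => 1) t) 1.
Proof.
  apply is_lim_seq_le_le with (u := fun l => 1 - INR t * (/ 2) ^ l) (w := fun _ => 1).
  - intros l. unfold E. rewrite rsum_const, Rmult_1_l. pose proof (pow2_pos l).
    pose proof (INR_sub_ge (2 ^ l) t). rewrite pow2_INR in H0.
    assert (INR (2 ^ l - t) <= 2 ^ l) by (rewrite <- pow2_INR; apply le_INR; lia).
    rewrite pow_inv. split.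
    + apply Rmult_le_reg_r with (2 ^ l); auto. unfold Rdiv.
      rewrite Rmult_assoc, Rinv_l by lra. field_simplify; lra.
    + apply Rmult_le_reg_r with (2 ^ l); auto. unfold Rdiv.
      rewrite Rmult_assoc, Rinv_l by lra. lra.
  - replace (Finite 1) with (Finite (1 - INR t * 0)) by (f_equal; ring).
    apply is_lim_seq_minus'. apply is_lim_seq_const. apply is_lim_seq_scal_l with (lu := Finite 0).
    apply is_lim_seq_geom. rewrite Rabs_pos_eq; lra.
  - apply is_lim_seq_const.
Qed.

Lemma lim_uniq (u : nat -> R) (a b : R) : is_lim_seq u a -> is_lim_seq u b -> a = b.
Proof. intros Ha Hb. apply is_lim_seq_unique in Ha. apply is_lim_seq_unique in Hb.
  rewrite Ha in Hb. inversion Hb. reflexivity. Qed.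

Lemma M_even r t : (1 <= r <= 3)%nat -> M r (2 * t) = M r t.
Proof.
  intros Hr. apply (lim_uniq (fun l => E (S l) (pw r) (2 * t))).
  - apply (is_lim_seq_incr_1 (fun l => E l (pw r) (2 * t))). apply M_lim; auto.
  - eapply is_lim_seq_ext. intros l. symmetry. apply E_even. apply M_lim; auto.
Qed.


Lemma E_comb4 l G1 G2 G3 G4 a b c t :
  E l (fun j => G1 j + a * G2 j + b * G3 j + c * G4 j) t =
  E l G1 t + a * E l G2 t + b * E l G3 t + c * E l G4 t.
Proof.
  unfold E.
  assert (H : forall m, rsum (fun n => G1 (fd t n) + a * G2 (fd t n) + b * G3 (fd t n) + c * G4 (fd t n)) m =
     rsum (fun n => G1 (fd t n)) m + a * rsum (fun n => G2 (fd t n)) m + b * rsum (fun n => G3 (fd t n)) m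
     + c * rsum (fun n => G4 (fd t n)) m).
  { induction m; simpl; [ring|]. rewrite IHm. ring. }
  rewrite H. unfold Rdiv. ring.
Qed.

Definition one (j : Z) : R := 1.

Lemma one_lim' t : is_lim_seq (fun l => E l one t) 1.
Proof. apply one_lim. Qed.

Lemma lim4 t1 t2 t3 t4 a b c (G1 G2 G3 G4 : Z -> R) (L1 L2 L3 L4 : R) :
  is_lim_seq (fun l => E l G1 t1) L1 -> is_lim_seq (fun l => E l G2 t2) L2 ->
  is_lim_seq (fun l => E l G3 t3) L3 -> is_lim_seq (fun l => E l G4 t4) L4 ->
  is_lim_seq (fun l => E l G1 t1 + a * E l G2 t2 + b * E l G3 t3 + c * E l G4 t4)
    (L1 + a * L2 + b * L3 + c * L4).
Proof.
  intros H1 H2 H3 H4.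
  apply is_lim_seq_plus'. apply is_lim_seq_plus'. apply is_lim_seq_plus'. auto.
  apply is_lim_seq_scal_l with (lu := Finite L2); auto.
  apply is_lim_seq_scal_l with (lu := Finite L3); auto.
  apply is_lim_seq_scal_l with (lu := Finite L4); auto.
Qed.

Lemma M1_odd t : M 1 (2 * t + 1) = / 2 * (M 1 t + M 1 (t + 1)).
Proof.
  apply (lim_uniq (fun l => E (S l) (pw 1) (2 * t + 1))).
  - apply (is_lim_seq_incr_1 (fun l => E l (pw 1) (2 * t + 1))). apply M_lim; lia.
  - apply is_lim_seq_ext with (u := fun l => / 2 * ((E l (pw 1) t + 1 * E l one t + 0 * E l one t + 0 * E l one t)
        + (E l (pw 1) (t + 1) + (-1) * E l one (t + 1) + 0 * E l one (t + 1) + 0 * E l one (t + 1)))).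
    + intros l. rewrite E_odd. rewrite <- !E_comb4. f_equal. f_equal; apply E_ext; intros j;
      unfold pw, one; rewrite ?plus_IZR, ?minus_IZR; ring.
    + replace (/ 2 * (M 1 t + M 1 (t + 1))) with
        (/ 2 * ((M 1 t + 1 * 1 + 0 * 1 + 0 * 1) + (M 1 (t + 1) + (-1) * 1 + 0 * 1 + 0 * 1))) by ring.
      apply is_lim_seq_scal_l with (lu := Finite _). apply is_lim_seq_plus'; apply lim4;
      (apply M_lim; lia) || apply one_lim'.
Qed.

Lemma M2_odd t : M 2 (2 * t + 1) = / 2 * ((M 2 t + 2 * M 1 t + 1) + (M 2 (t + 1) + (-2) * M 1 (t + 1) + 1)).
Proof.
  apply (lim_uniq (fun l => E (S l) (pw 2) (2 * t + 1))).
  - apply (is_lim_seq_incr_1 (fun l => E l (pw 2) (2 * t + 1))). apply M_lim; lia.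
  - apply is_lim_seq_ext with (u := fun l => / 2 * ((E l (pw 2) t + 2 * E l (pw 1) t + 1 * E l one t + 0 * E l one t)
        + (E l (pw 2) (t + 1) + (-2) * E l (pw 1) (t + 1) + 1 * E l one (t + 1) + 0 * E l one (t + 1)))).
    + intros l. rewrite E_odd. rewrite <- !E_comb4. f_equal. f_equal; apply E_ext; intros j;
      unfold pw, one; rewrite ?plus_IZR, ?minus_IZR; ring.
    + replace (/ 2 * ((M 2 t + 2 * M 1 t + 1) + (M 2 (t + 1) + (-2) * M 1 (t + 1) + 1))) with
        (/ 2 * ((M 2 t + 2 * M 1 t + 1 * 1 + 0 * 1) + (M 2 (t + 1) + (-2) * M 1 (t + 1) + 1 * 1 + 0 * 1))) by ring.
      apply is_lim_seq_scal_l with (lu := Finite _). apply is_lim_seq_plus'; apply lim4;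
      (apply M_lim; lia) || apply one_lim'.
Qed.

Lemma M3_odd t : M 3 (2 * t + 1) = / 2 * ((M 3 t + 3 * M 2 t + 3 * M 1 t + 1) + (M 3 (t + 1) + (-3) * M 2 (t + 1) + 3 * M 1 (t + 1) + (-1))).
Proof.
  apply (lim_uniq (fun l => E (S l) (pw 3) (2 * t + 1))).
  - apply (is_lim_seq_incr_1 (fun l => E l (pw 3) (2 * t + 1))). apply M_lim; lia.
  - apply is_lim_seq_ext with (u := fun l => / 2 * ((E l (pw 3) t + 3 * E l (pw 2) t + 3 * E l (pw 1) t + 1 * E l one t)
        + (E l (pw 3) (t + 1) + (-3) * E l (pw 2) (t + 1) + 3 * E l (pw 1) (t + 1) + (-1) * E l one (t + 1)))).
    + intros l. rewrite E_odd. rewrite <- !E_comb4. f_equal. f_equal; apply E_ext; intros j;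
      unfold pw, one; rewrite ?plus_IZR, ?minus_IZR; ring.
    + replace (/ 2 * ((M 3 t + 3 * M 2 t + 3 * M 1 t + 1) + (M 3 (t + 1) + (-3) * M 2 (t + 1) + 3 * M 1 (t + 1) + (-1)))) with
        (/ 2 * ((M 3 t + 3 * M 2 t + 3 * M 1 t + 1 * 1) + (M 3 (t + 1) + (-3) * M 2 (t + 1) + 3 * M 1 (t + 1) + (-1) * 1))) by ring.
      apply is_lim_seq_scal_l with (lu := Finite _). apply is_lim_seq_plus'; apply lim4;
      (apply M_lim; lia) || apply one_lim'.
Qed.

Lemma M_zero r : (1 <= r <= 3)%nat -> M r 0 = 0.
Proof.
  intros Hr. apply (lim_uniq (fun l => E l (pw r) 0)). apply M_lim; auto.
  apply is_lim_seq_ext with (u := fun _ => 0). 2: apply is_lim_seq_const.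
  intros l. unfold E. rewrite (rsum_ext _ (fun _ => 0 * 1)).
  rewrite rsum_const. unfold Rdiv; ring.
  intros i _. unfold pw, fd. rewrite Nat.add_0_r, Z.sub_diag. destruct r; [lia|]. simpl; ring.
Qed.

Lemma parity t : exists u, t = (2 * u)%nat \/ t = (2 * u + 1)%nat.
Proof. destruct (Nat.Even_or_Odd t) as [[u Hu]|[u Hu]]; exists u; lia. Qed.

Lemma M1_zero_all : forall t, M 1 t = 0.
Proof.
  assert (H : forall n t, (t < n)%nat -> M 1 t = 0).
  { induction n; intros t Ht; [lia|].
    destruct (parity t) as [u [->| ->]].
    - destruct u. apply M_zero; lia. rewrite M_even by lia. apply IHn; lia.
    - rewrite M1_odd. destruct u.
      + pose proof (M1_odd 0) as H0.
        change (2 * 0 + 1)%nat with 1%nat in *. change (2 * 0)%nat with 0%nat in *.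
        change (0 + 1)%nat with 1%nat in *. rewrite M_zero in * by lia. lra.
      + rewrite (IHn (S u)), (IHn (S u + 1)%nat) by lia. ring. }
  intros t. apply (H (S t)); lia.
Qed.

Lemma M2_diff_all : forall t, -2 <= M 2 t - M 2 (t + 1) <= 2.
Proof.
  assert (H : forall n t, (t < n)%nat -> -2 <= M 2 t - M 2 (t + 1) <= 2).
  { induction n; intros t Ht; [lia|].
    destruct (parity t) as [u [->| ->]].
    - rewrite M_even by lia. replace (2 * u + 1)%nat with (2 * u + 1)%nat by lia.
      rewrite M2_odd, !M1_zero_all. destruct u.
      + pose proof (M2_odd 0) as H0. rewrite !M1_zero_all in H0.
        change (2 * 0 + 1)%nat with 1%nat in *. change (2 * 0)%nat with 0%nat in *.
        change (0 + 1)%nat with 1%nat in *. rewrite M_zero in * by lia. lra.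
      + pose proof (IHn (S u) ltac:(lia)). lra.
    - replace (2 * u + 1 + 1)%nat with (2 * (u + 1))%nat by lia.
      rewrite M_even by lia. rewrite M2_odd, !M1_zero_all.
      pose proof (IHn u ltac:(lia)). lra. }
  intros t. apply (H (S t)); lia.
Qed.

Lemma D_eq t : D t = M 2 t - M 3 t / 3.
Proof.
  pose proof (M1_zero_all t) as H. unfold M in *.
  unfold D, kappa, cumulant_of. cbn [cum_aux Nat.eqb seq map fold_right Nat.sub].
  rewrite H. rewrite Rminus_diag, !Rmult_0_r, !Rmult_0_l. lra.
Qed.

Lemma M_pow2 r j x : (1 <= r <= 3)%nat -> M r (2 ^ j * x) = M r x.
Proof. intros Hr. induction j. simpl. now rewrite Nat.add_0_r.
  rewrite Nat.pow_succ_r', <- Nat.mul_assoc, M_even by auto. exact IHj. Qed.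

Definition uu (t j : nat) : nat := (2 ^ (j + 1) * t + 2 ^ j - 1)%nat.

Lemma uu_S t j : uu t (S j) = (2 * uu t j + 1)%nat.
Proof. unfold uu. replace (S j + 1)%nat with (S (j + 1)) by lia. rewrite !Nat.pow_succ_r'.
  pose proof (Nat.pow_nonzero 2 j ltac:(lia)). lia. Qed.

Lemma uu_S1 t j : (uu t j + 1)%nat = (2 ^ j * (2 * t + 1))%nat.
Proof. unfold uu. rewrite Nat.pow_add_r. pose proof (Nat.pow_nonzero 2 j ltac:(lia)). simpl (2 ^ 1)%nat. nia. Qed.

Lemma uu_0 t : uu t 0 = (2 * t)%nat.
Proof. unfold uu. simpl. lia. Qed.

Lemma iter_formula t : forall j,
  2 ^ j * (M 2 (uu t j) - M 2 (2 * t + 1)) = 2 ^ (j + 1) - (2 - (M 2 t - M 2 (2 * t + 1))) /\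
  2 ^ j * (D (uu t j) - D (2 * t + 1)) = (D t - D (2 * t + 1)) + INR j * (2 - (M 2 t - M 2 (2 * t + 1))).
Proof.
  induction j.
  - rewrite uu_0, !D_eq, !M_even by lia. simpl. split; ring.
  - destruct IHj as [IH1 IH2].
    rewrite uu_S. rewrite !D_eq in *.
    rewrite M2_odd, M3_odd, !M1_zero_all.
    rewrite uu_S1, !M_pow2 by lia. rewrite S_INR.
    replace (2 ^ (S j + 1)) with (4 * 2 ^ j) by (rewrite pow_add; simpl; ring).
    replace (2 ^ (j + 1)) with (2 * 2 ^ j) in * by (rewrite pow_add; simpl; ring).
    replace (2 ^ S j) with (2 * 2 ^ j) by (simpl; ring).
    split; lra.
Qed.

Theorem corollary2p11 (t k : nat) (hk : (1 <= k)%nat) :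
  D (2 ^ (k + 1) * t + 2 ^ k - 1)%nat
    >= Rmin (D t) (D (t + 1)%nat) + INR k / 2 ^ (k - 1).
Proof.
  change (2 ^ (k + 1) * t + 2 ^ k - 1)%nat with (uu t k).
  destruct (iter_formula t k) as [_ H2].
  pose proof (M2_diff_all t) as HD.
  assert (HP : M 2 (2 * t + 1) = (M 2 t + M 2 (t + 1)) / 2 + 1).
  { rewrite M2_odd, !M1_zero_all. field. }
  assert (HQ : D (2 * t + 1) = (D t + D (t + 1)) / 2 + 1 - (M 2 t - M 2 (t + 1)) / 2).
  { rewrite !D_eq, M3_odd, M2_odd, !M1_zero_all. field. }
  rewrite HP in H2.
  set (q := 2 ^ (k - 1)).
  assert (Hp : 2 ^ k = 2 * q).
  { unfold q. replace k with (S (k - 1)) at 1 by lia. simpl. ring. }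
  rewrite Hp in H2.
  assert (Hq : 1 <= q) by (apply pow_R1_Rle; lra).
  set (mu := Rmin (D t) (D (t + 1))).
  assert (Hm1 : mu <= D t) by apply Rmin_l.
  assert (Hm2 : mu <= D (t + 1)) by apply Rmin_r.
  set (y := D (uu t k)) in *.
  set (Q := D (2 * t + 1)) in *.
  set (Dl := M 2 t - M 2 (t + 1)) in *.
  assert (HQm : 1 - Dl / 2 <= Q - mu) by (rewrite HQ; lra).
  assert (Hk0 : 0 <= INR k) by apply pos_INR.
  assert (A1 : 0 <= (2 * q - 1) * (Q - mu)) by (apply Rmult_le_pos; lra).
  assert (A2 : 0 <= INR k * (1 - Dl / 2)) by (apply Rmult_le_pos; lra).
  assert (Key : 2 * INR k <= 2 * q * (y - mu)).
  { unfold Dl in *. lra. }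
  apply Rle_ge.
  assert (INR k / q <= y - mu).
  { apply Rmult_le_reg_r with q; [lra|]. unfold Rdiv. rewrite Rmult_assoc, Rinv_l by lra. lra. }
  lra.
Qed.
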